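(* Let $E=(E^0,E^1,s,r)$ and $F=(F^0,F^1,s,r)$ be directed graphs. Then $E$ and $F$ are continuously orbit equivalent if and only if the canonical actions $\theta^E$ of $\mathcal{S}_E$ on $\partial E$ and $\theta^F$ of $\mathcal{S}_F$ on $\partial F$ are continuously orbit equivalent.
   Context: For a directed graph $E$: finite paths $\mu=\mu_1\cdots\mu_n$ with $r(\mu_i)=s(\mu_{i+1})$, $E^\star$ finite paths (including vertices, with $s(v)=r(v)=v$), $E^\infty$ infinite paths; singular vertex = sink or infinite emitter; $\partial E=E^\infty\cup\{\mu\in E^\star:r(\mu)\text{ singular}\}$, $\partial E^{\ge n}$ its paths of length $\ge n$; $Z(\mu)=\{\mu x:x\in\partial E,s(x)=r(\mu)\}$; the sets $Z(\mu)\setminus\bigcup_{e\in F}Z(\mu e)$ ($F\subseteq s^{-1}(r(\mu))$ finite) form a basis of the topology of $\partial E$. Shift $\sigma_E:\partial E^{\ge1}\to\partial E$: $\sigma_E(x)=r(x)$ if $|x|=1$, $\sigma_E(x_1x_2\cdots)=x_2\cdots$ if $|x|\ge2$; $\sigma_E^0=\mathrm{id}$. $E$ and $F$ are continuously orbit equivalent if there are a homeomorphism $\varphi:\partial E\to\partial F$ and continuous maps $k,l:\partial E^{\ge1}\to\mathbb{N}$, $k',l':\partial F^{\ge1}\to\mathbb{N}$ with $\sigma_F^{k(x)}(\varphi(\sigma_E(x)))=\sigma_F^{l(x)}(\varphi(x))$ for all $x\in\partial E^{\ge1}$ and $\sigma_E^{k'(y)}(\varphi^{-1}(\sigma_F(y)))=\sigma_E^{l'(y)}(\varphi^{-1}(y))$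 for all $y\in\partial F^{\ge1}$. $\mathcal{S}_E=\{(\mu,\nu)\in E^\star\times E^\star:r(\mu)=r(\nu)\}\cup\{0\}$, $0$ absorbing, $(\mu,\nu)(\zeta,\eta)=(\mu,\eta\gamma)$ if $\nu=\zeta\gamma$, $(\mu\gamma,\eta)$ if $\zeta=\nu\gamma$, else $0$. Canonical action $\theta^E$: $\theta_{(\mu,\nu)}:Z(\nu)\to Z(\mu)$, $\nu x\mapsto\mu x$, $\theta_0$ empty. Two topological partial actions $\theta$ of $S$ on $X$ and $\gamma$ of $T$ on $Y$ (with $\theta_s$ defined on $X_{s^*}$) are continuously orbit equivalent if there are a homeomorphism $\varphi:X\to Y$ and continuous maps $a:S*X\to T$, $b:T*Y\to S$, where $S*X=\{(s,x):x\in X_{s^*}\}\subseteq S\times X$ and $S,T$ are discrete, such that $a(s,x)$ is defined at $\varphi(x)$, $b(t,y)$ at $\varphi^{-1}(y)$, $\varphi(\theta_s(x))=\gamma_{a(s,x)}(\varphi(x))$ and $\varphi^{-1}(\gamma_t(y))=\theta_{b(t,y)}(\varphi^{-1}(y))$. *)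

(* Defs.v *)
From Stdlib Require Import List Arith.
Import ListNotations.
Set Implicit Arguments.

(* A directed graph E = (E^0, E^1, s, r); no countability assumed. *)
Record graph := Graph { vert : Type; edge : Type;
                        gs : edge -> vert; gr : edge -> vert }.
Arguments gs {g} _.
Arguments gr {g} _.

Definition discrete_open {T : Type} (U : T -> Prop) : Prop := True.

Definition prod_open {S X : Type} (openS : (S -> Prop) -> Prop)
  (openX : (X -> Prop) -> Prop) (W : S * X -> Prop) : Prop :=
  forall p, W p -> exists (A : S -> Prop) (U : X -> Prop),
    openS A /\ openX U /\ A (fst p) /\ U (snd p) /\
    forall s x, A s -> U x -> W (s, x).

Definition cont_on {X Y : Type} (openX : (X -> Prop) -> Prop)
  (openY : (Y -> Prop) -> Prop) (D : X -> Prop) (f : X -> Y) : Prop :=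
  forall V, openY V -> exists U, openX U /\
    forall x, D x -> (U x <-> V (f x)).

Section Paths.
Variable E : graph.

(* raw paths: a finite path given by its source vertex and its edge list
   (the vertex v itself when the list is empty), or an infinite path *)
Inductive path : Type :=
  | Fin (v : vert E) (l : list (edge E))
  | Inf (f : nat -> edge E).

Fixpoint composable (l : list (edge E)) : Prop :=
  match l with
  | [] => True
  | e :: l' => match l' with [] => True | e' :: _ => gr e = gs e' end
               /\ composable l'
  end.

Definition is_finpath (p : path) : Prop :=
  match p with
  | Fin v l => match l with [] => True | e :: _ => gs e = v end /\ composable l
  | Inf _ => False
  end.

Definition is_infpath (p : path) : Prop :=
  match p with
  | Fin _ _ => False
  | Inf f => forall n, gr (f n) = gs (f (S n))
  end.

Definition srcp (p : path) : vert E :=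
  match p with Fin v _ => v | Inf f => gs (f 0) end.

(* range of a finite path (junk value for infinite paths) *)
Definition rng (p : path) : vert E :=
  match p with
  | Fin v [] => v
  | Fin _ (e :: l) => gr (last l e)
  | Inf f => gs (f 0)
  end.

Definition plen (p : path) : nat :=
  match p with Fin _ l => length l | Inf _ => 0 end.

Definition sink (v : vert E) : Prop := forall e, gs e <> v.
Definition inf_emitter (v : vert E) : Prop :=
  ~ exists l : list (edge E), forall e, gs e = v -> In e l.
Definition singular (v : vert E) : Prop := sink v \/ inf_emitter v.

Definition boundary (p : path) : Prop :=
  is_infpath p \/ (is_finpath p /\ singular (rng p)).

Definition len_ge (p : path) (n : nat) : Prop :=
  match p with Fin _ l => n <= length l | Inf _ => True end.

Definition bdry_ge1 (p : path) : Prop := boundary p /\ len_ge p 1.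

(* the shift sigma_E (meaningful on paths of length >= 1):
   a path of length 1 goes to its range vertex *)
Definition shift1 (p : path) : path :=
  match p with
  | Fin v [] => Fin v []
  | Fin _ (e :: l) => Fin (gr e) l
  | Inf f => Inf (fun n => f (S n))
  end.

Definition shiftn (n : nat) (p : path) : path := Nat.iter n shift1 p.

Definition concat (p q : path) : path :=
  match p, q with
  | Fin v l, Fin _ l' => Fin v (l ++ l')
  | Fin v l, Inf f => Inf (fun n => match nth_error l n with
                                     | Some e => e
                                     | None => f (n - length l) end)
  | Inf f, _ => Inf f
  end.

Definition cyl (mu : path) (y : path) : Prop :=
  exists x, boundary x /\ srcp x = rng mu /\ y = concat mu x.

Definition basic (mu : path) (F : list (edge E)) (y : path) : Prop :=
  cyl mu y /\ forall e, In e F -> ~ cyl (concat mu (Fin (gs e) [e])) y.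

Definition bopen (U : path -> Prop) : Prop :=
  (forall y, U y -> boundary y) /\
  forall y, U y -> exists (mu : path) (F : list (edge E)),
    is_finpath mu /\ (forall e, In e F -> gs e = rng mu) /\
    basic mu F y /\ forall z, basic mu F z -> U z.

(* the inverse semigroup S_E: None is 0, Some (mu, nu) is (mu, nu) *)
Definition sg : Type := option (path * path).

Definition in_sg (t : sg) : Prop :=
  match t with
  | None => True
  | Some (m, n) => is_finpath m /\ is_finpath n /\ rng m = rng n
  end.

Definition theta_dom (t : sg) (y : path) : Prop :=
  match t with None => False | Some (_, n) => cyl n y end.

Definition theta (t : sg) (y : path) : path :=
  match t with
  | None => y
  | Some (m, n) => concat m (shiftn (plen n) y)
  end.

Definition star_dom (p : sg * path) : Prop :=
  in_sg (fst p) /\ theta_dom (fst p) (snd p).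

End Paths.

Definition is_homeo (E F : graph) (phi : path E -> path F)
  (psi : path F -> path E) : Prop :=
  (forall x, boundary x -> boundary (phi x)) /\
  (forall y, boundary y -> boundary (psi y)) /\
  (forall x, boundary x -> psi (phi x) = x) /\
  (forall y, boundary y -> phi (psi y) = y) /\
  cont_on (@bopen E) (@bopen F) (@boundary E) phi /\
  cont_on (@bopen F) (@bopen E) (@boundary F) psi.

Definition graph_coe (E F : graph) : Prop :=
  exists (phi : path E -> path F) (psi : path F -> path E)
         (k l : path E -> nat) (k' l' : path F -> nat),
    is_homeo phi psi /\
    cont_on (@bopen E) (@discrete_open nat) (@bdry_ge1 E) k /\
    cont_on (@bopen E) (@discrete_open nat) (@bdry_ge1 E) l /\
    cont_on (@bopen F) (@discrete_open nat) (@bdry_ge1 F) k' /\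
    cont_on (@bopen F) (@discrete_open nat) (@bdry_ge1 F) l' /\
    (forall x, bdry_ge1 x ->
       len_ge (phi (shift1 x)) (k x) /\ len_ge (phi x) (l x) /\
       shiftn (k x) (phi (shift1 x)) = shiftn (l x) (phi x)) /\
    (forall y, bdry_ge1 y ->
       len_ge (psi (shift1 y)) (k' y) /\ len_ge (psi y) (l' y) /\
       shiftn (k' y) (psi (shift1 y)) = shiftn (l' y) (psi y)).

Definition action_coe (E F : graph) : Prop :=
  exists (phi : path E -> path F) (psi : path F -> path E)
         (a : sg E * path E -> sg F) (b : sg F * path F -> sg E),
    is_homeo phi psi /\
    (forall p, star_dom p -> in_sg (a p)) /\
    (forall p, star_dom p -> in_sg (b p)) /\
    cont_on (prod_open (@discrete_open (sg E)) (@bopen E))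
            (@discrete_open (sg F)) (@star_dom E) a /\
    cont_on (prod_open (@discrete_open (sg F)) (@bopen F))
            (@discrete_open (sg E)) (@star_dom F) b /\
    (forall s x, star_dom (s, x) ->
       theta_dom (a (s, x)) (phi x) /\
       phi (theta s x) = theta (a (s, x)) (phi x)) /\
    (forall t y, star_dom (t, y) ->
       theta_dom (b (t, y)) (psi y) /\
       psi (theta t y) = theta (b (t, y)) (psi y)).

(* Main.v *)
From Stdlib Require Import List Arith Lia FunctionalExtensionality Classical.
Require Import Defs.
Import ListNotations.
Set Implicit Arguments.
Arguments Fin {E} v l.
Arguments Inf {E} f.
Arguments composable {E} l.
Arguments singular {E} v.
Arguments sink {E} v.
Arguments inf_emitter {E} v.

Section G.
Variable E : graph.
Notation P := (path E).

Definition idx (p : P) (n : nat) : option (edge E) :=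
  match p with Fin _ l => nth_error l n | Inf f => Some (f n) end.

Definition pre (n : nat) (p : P) : P :=
  match p with Fin v l => Fin v (firstn n l)
             | Inf f => Fin (gs (f 0)) (map f (seq 0 n)) end.

Lemma path_ext (p q : P) : srcp p = srcp q -> (forall n, idx p n = idx q n) -> p = q.
Proof.
  destruct p as [v l|f], q as [w l'|g]; simpl; intros Hs Hi.
  - subst; f_equal; apply nth_error_ext; auto.
  - specialize (Hi (length l)). rewrite (proj2 (nth_error_None _ _)) in Hi; [discriminate|lia].
  - specialize (Hi (length l')). rewrite (proj2 (nth_error_None l' _)) in Hi; [discriminate|lia].
  - f_equal; apply functional_extensionality; intro n; specialize (Hi n); congruence.
Qed.

Lemma idx_shift1 (p : P) n : idx (shift1 p) n = idx p (S n).
Proof. destruct p as [v [|e l]|f]; simpl; auto. destruct n; auto. Qed.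

Lemma shiftn_S (p : P) n : shiftn (S n) p = shift1 (shiftn n p).
Proof. reflexivity. Qed.

Lemma shiftn_S' (p : P) n : shiftn (S n) p = shiftn n (shift1 p).
Proof. unfold shiftn. now rewrite Nat.iter_succ_r. Qed.

Lemma shiftn_add (p : P) m n : shiftn (m + n) p = shiftn m (shiftn n p).
Proof. unfold shiftn. apply Nat.iter_add. Qed.

Lemma idx_shiftn (p : P) m n : idx (shiftn m p) n = idx p (m + n).
Proof.
  revert n; induction m; intro n; [reflexivity|].
  rewrite shiftn_S, idx_shift1, IHm. f_equal; lia.
Qed.

Lemma idx_concat v l (q : P) n :
  idx (concat (Fin v l) q) n = if n <? length l then nth_error l n else idx q (n - length l).
Proof.
  destruct q as [w l'|f]; simpl.
  - apply nth_error_app.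
  - destruct (Nat.ltb_spec n (length l)).
    + destruct (nth_error l n) eqn:H0; auto. apply nth_error_None in H0; lia.
    + rewrite (proj2 (nth_error_None l n)); auto.
Qed.

Lemma idx_pre m (p : P) n : idx (pre m p) n = if n <? m then idx p n else None.
Proof.
  destruct p as [v l|f]; simpl.
  - apply nth_error_firstn.
  - rewrite nth_error_map, nth_error_seq. destruct (n <? m); auto.
Qed.

Lemma srcp_pre m (p : P) : srcp (pre m p) = srcp p.
Proof. destruct p; reflexivity. Qed.

Lemma rng_snoc (v : vert E) L e : rng (Fin v (L ++ [e])) = gr e.
Proof. destruct L as [|a L]; simpl; auto. now rewrite last_last. Qed.

Lemma shiftn_Fin n (v : vert E) l :
  shiftn n (Fin v l) = Fin (rng (Fin v (firstn n l))) (skipn n l).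
Proof.
  induction n.
  - destruct l; reflexivity.
  - rewrite shiftn_S, IHn.
    destruct (skipn n l) as [|e r] eqn:Hs.
    + cbn [shift1]. assert (length l <= n).
      { apply nth_error_None. rewrite <- hd_error_skipn, Hs. reflexivity. }
      rewrite !firstn_all2 by lia. rewrite skipn_all2 by lia. reflexivity.
    + cbn [shift1]. assert (He : nth_error l n = Some e) by (rewrite <- hd_error_skipn, Hs; reflexivity).
      pose proof (firstn_skipn_middle _ _ He) as Hm.
      assert (Hf : firstn (S n) l = firstn n l ++ [e]).
      { assert (Hl : length (firstn n l) = n).
        { apply firstn_length_le. apply Nat.lt_le_incl, nth_error_Some. congruence. }
        rewrite <- Hm at 1. rewrite firstn_app, Hl.
        rewrite (firstn_all2 (n:=S n) (firstn n l)) by lia.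
        replace (S n - n) with 1 by lia. reflexivity. }
      rewrite Hf, rng_snoc.
      assert (H : skipn (S n) l = r).
      { change (S n) with (1 + n). rewrite <- skipn_skipn, Hs. reflexivity. }
      now rewrite H.
Qed.

Lemma shiftn_Inf n (f : nat -> edge E) : shiftn n (Inf f) = Inf (fun k => f (n + k)).
Proof.
  induction n.
  - reflexivity.
  - rewrite shiftn_S, IHn. simpl. f_equal. apply functional_extensionality; intro k. f_equal; lia.
Qed.


Definition chain (p : P) : Prop :=
  (forall e, idx p 0 = Some e -> gs e = srcp p) /\
  (forall n e e', idx p n = Some e -> idx p (S n) = Some e' -> gr e = gs e').

Lemma composable_iff (l : list (edge E)) :
  composable l <-> (forall n e e', nth_error l n = Some e -> nth_error l (S n) = Some e' -> gr e = gs e').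
Proof.
  induction l as [|a l IH]; simpl.
  - split; auto. intros _ n e e' H. destruct n; discriminate.
  - split.
    + intros [H1 H2] n e e' He He'. destruct n as [|n].
      * simpl in He, He'. inversion He; subst. destruct l; simpl in He'; [discriminate|]. congruence.
      * eapply (proj1 IH H2); eauto.
    + intros H. split.
      * destruct l as [|b l]; auto. apply (H 0); reflexivity.
      * apply IH. intros n e e' He He'. apply (H (S n)); auto.
Qed.

Lemma finpath_chain (v : vert E) l : is_finpath (Fin v l) <-> chain (Fin v l).
Proof.
  unfold chain; simpl. rewrite composable_iff. split.
  - intros [H1 H2]; split; auto. intros e He. destruct l; simpl in He; [discriminate|]. inversion He; subst; auto.
  - intros [H1 H2]; split; auto; destruct l; auto; apply H1; reflexivity.
Qed.

Lemma infpath_chain (f : nat -> edge E) : is_infpath (Inf f) <-> chain (Inf f).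
Proof.
  unfold chain; simpl. split.
  - intros H; split. + congruence. + intros n e e' He He'. inversion He; inversion He'; subst; auto.
  - intros [_ H] n. apply (H n); reflexivity.
Qed.

Definition endok (p : P) : Prop :=
  match p with Fin _ _ => singular (rng p) | Inf _ => True end.

Lemma boundary_iff (p : P) : boundary p <-> chain p /\ endok p.
Proof.
  unfold boundary. destruct p as [v l|f]; simpl.
  - rewrite <- finpath_chain. simpl. tauto.
  - rewrite <- infpath_chain. simpl. tauto.
Qed.

Lemma last_cons (a : edge E) l d : last (a :: l) d = last l a.
Proof. revert a d; induction l as [|b l IH]; intros a d; auto. change (last (b :: l) d = last (b :: l) a). rewrite !IH. reflexivity. Qed.

Lemma rng_nth (v : vert E) l n e : nth_error l n = Some e -> S n = length l -> rng (Fin v l) = gr e.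
Proof.
  intros He Hl. pose proof (firstn_skipn_middle _ _ He) as Hm.
  rewrite skipn_all2 in Hm by lia. rewrite <- Hm. apply rng_snoc.
Qed.

Lemma srcp_shift1 (p : P) e : chain p -> idx p 0 = Some e -> srcp (shift1 p) = gr e.
Proof.
  intros [H1 H2] He. destruct p as [v [|a l]|f]; simpl in *; try discriminate.
  - congruence.
  - symmetry. apply (H2 0); auto.
Qed.

Lemma chain_shift1 (p : P) : chain p -> chain (shift1 p).
Proof.
  intros Hc. pose proof Hc as [H1 H2]. split.
  - intros e He. rewrite idx_shift1 in He.
    destruct (idx p 0) as [a|] eqn:Ha.
    + rewrite (srcp_shift1 Hc Ha). symmetry. apply (H2 0); auto.
    + destruct p as [v [|b l]|f]; simpl in *; discriminate.
  - intros n e e'. rewrite !idx_shift1. apply H2.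
Qed.

Lemma endok_shift1 (p : P) : endok p -> endok (shift1 p).
Proof.
  destruct p as [v [|a l]|f]; simpl; auto.
  destruct l as [|b l]; [simpl; auto|]. unfold endok, shift1, rng. rewrite last_cons. auto.
Qed.

Lemma boundary_shift1 (p : P) : boundary p -> boundary (shift1 p).
Proof. rewrite !boundary_iff. intros [H1 H2]; split; [apply chain_shift1|apply endok_shift1]; auto. Qed.

Lemma boundary_shiftn (p : P) n : boundary p -> boundary (shiftn n p).
Proof. intros H; induction n; auto. rewrite shiftn_S. now apply boundary_shift1. Qed.

Lemma chain_pre (p : P) n : chain p -> chain (pre n p).
Proof.
  intros [H1 H2]; split.
  - intros e. rewrite idx_pre, srcp_pre. destruct (0 <? n); [apply H1|discriminate].
  - intros k e e'. rewrite !idx_pre. destruct (k <? n), (S k <? n); try discriminate; apply H2.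
Qed.

Lemma finpath_pre (p : P) n : boundary p -> is_finpath (pre n p).
Proof.
  intros H. apply boundary_iff in H as [H _].
  pose proof (chain_pre n H) as Hc. destruct p; simpl in *; apply finpath_chain; auto.
Qed.

Lemma rng_pre_Inf (f : nat -> edge E) n : is_infpath (Inf f) -> rng (pre n (Inf f)) = gs (f n).
Proof.
  intros Hf. unfold pre. destruct n as [|m]; [reflexivity|].
  rewrite seq_S, map_app. cbn [map]. rewrite rng_snoc. apply Hf.
Qed.

Lemma srcp_shiftn_rng (p : P) n : boundary p -> srcp (shiftn n p) = rng (pre n p).
Proof.
  intros Hb. destruct p as [v l|f].
  - rewrite shiftn_Fin. reflexivity.
  - rewrite shiftn_Inf, rng_pre_Inf; [simpl; f_equal; f_equal; lia|]. destruct Hb as [H|[H _]]; auto; contradiction.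
Qed.

Lemma decomp (p : P) n : concat (pre n p) (shiftn n p) = p.
Proof.
  destruct p as [v l|f].
  - rewrite shiftn_Fin. simpl. now rewrite firstn_skipn.
  - rewrite shiftn_Inf. simpl. f_equal. apply functional_extensionality; intro k.
    rewrite nth_error_map, nth_error_seq, length_map, length_seq.
    destruct (Nat.ltb_spec k n); simpl; auto. f_equal; lia.
Qed.

Lemma shift_concat (v : vert E) l (q : P) :
  srcp q = rng (Fin v l) -> shiftn (length l) (concat (Fin v l) q) = q.
Proof.
  intros Hs. destruct q as [w l'|f]; simpl.
  - rewrite shiftn_Fin. rewrite firstn_app, firstn_all, Nat.sub_diag. simpl. rewrite app_nil_r.
    rewrite skipn_app, skipn_all, Nat.sub_diag. simpl. simpl in Hs. congruence.
  - rewrite shiftn_Inf. f_equal. apply functional_extensionality; intro k.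
    rewrite (proj2 (nth_error_None l _)) by lia. f_equal; lia.
Qed.

Lemma concat_assoc (v : vert E) l w l' (q : P) :
  concat (concat (Fin v l) (Fin w l')) q = concat (Fin v l) (concat (Fin w l') q).
Proof.
  destruct q as [u l''|f]; simpl.
  - now rewrite app_assoc.
  - f_equal. apply functional_extensionality; intro k.
    rewrite nth_error_app. rewrite length_app.
    destruct (Nat.ltb_spec k (length l)).
    + destruct (nth_error l k) eqn:H1; auto. apply nth_error_None in H1; lia.
    + rewrite (proj2 (nth_error_None l k)) by lia.
      destruct (nth_error l' (k - length l)); auto. f_equal; lia.
Qed.

Lemma srcp_concat (m q : P) : is_finpath m -> srcp q = rng m -> srcp (concat m q) = srcp m.
Proof.
  destruct m as [v l|f]; [|intros []]. intros [H1 _] Hs.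
  destruct q as [w l'|g]; simpl; auto.
  destruct l as [|e l]; simpl in *; auto.
Qed.

Lemma chain_concat (v : vert E) l (q : P) :
  chain (Fin v l) -> chain q -> srcp q = rng (Fin v l) -> chain (concat (Fin v l) q).
Proof.
  intros Hm Hq Hs. pose proof Hm as [M1 M2]. pose proof Hq as [Q1 Q2]. split.
  - intros e. rewrite idx_concat.
    rewrite srcp_concat; [|apply finpath_chain; auto|auto].
    destruct (Nat.ltb_spec 0 (length l)).
    + apply M1.
    + destruct l; simpl in *; [|lia]. rewrite <- Hs. apply Q1.
  - intros n e e'. rewrite !idx_concat.
    destruct (Nat.ltb_spec n (length l)), (Nat.ltb_spec (S n) (length l)).
    + apply M2.
    + intros He He'. assert (S n = length l) by lia.
      rewrite (rng_nth v l He H1) in Hs. replace (S n - length l) with 0 in He' by lia.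
      rewrite <- Hs. symmetry. apply Q1; auto.
    + lia.
    + replace (S n - length l) with (S (n - length l)) by lia. apply Q2.
Qed.

Lemma rng_app (v : vert E) l w l' : w = rng (Fin v l) -> rng (Fin v (l ++ l')) = rng (Fin w l').
Proof.
  intros ->. destruct l' as [|a l'] using rev_ind.
  - now rewrite app_nil_r.
  - rewrite app_assoc, !rng_snoc. reflexivity.
Qed.

Lemma boundary_concat (m q : P) :
  is_finpath m -> boundary q -> srcp q = rng m -> boundary (concat m q).
Proof.
  destruct m as [v l|f]; [|intros []]. intros Hm Hq Hs.
  apply boundary_iff in Hq as [Q1 Q2]. apply finpath_chain in Hm.
  apply boundary_iff. split; [apply chain_concat; auto|].
  destruct q as [w l'|g]; [|exact I]. change (singular (rng (Fin v (l ++ l')))). simpl in Hs. erewrite rng_app; eauto.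
Qed.


Lemma pre_fin (p : P) n : exists v l, pre n p = Fin v l.
Proof. destruct p; simpl; eauto. Qed.

Lemma idx_concat_gen (m q : P) n : (exists v l, m = Fin v l) ->
  idx (concat m q) n = if n <? plen m then idx m n else idx q (n - plen m).
Proof. intros (v & l & ->). apply idx_concat. Qed.

Lemma len_ge_idx (p : P) n : len_ge p n <-> forall k, k < n -> idx p k <> None.
Proof.
  destruct p as [v l|f]; simpl.
  - split.
    + intros H k Hk. apply nth_error_Some. lia.
    + intros H. destruct n; [lia|]. specialize (H n ltac:(lia)). apply nth_error_Some in H. lia.
  - split; auto. discriminate.
Qed.

Lemma plen_pre (p : P) n : len_ge p n -> plen (pre n p) = n.
Proof.
  destruct p as [v l|f]; simpl; intros H.
  - rewrite length_firstn. lia.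
  - now rewrite length_map, length_seq.
Qed.
Arguments plen_pre {p n} _.

Lemma len_ge_le (p : P) n m : len_ge p n -> m <= n -> len_ge p m.
Proof. destruct p; simpl; auto; lia. Qed.

Lemma len_ge_shiftn (p : P) n m : len_ge p (n + m) -> len_ge (shiftn n p) m.
Proof.
  rewrite !len_ge_idx. intros H k Hk. rewrite idx_shiftn. apply H. lia.
Qed.

Lemma len_ge_shiftn_inv (p : P) n m : len_ge (shiftn n p) (S m) -> len_ge p (n + S m).
Proof.
  rewrite !len_ge_idx. intros H k Hk.
  destruct (Nat.ltb_spec k n).
  - specialize (H m ltac:(lia)). rewrite idx_shiftn in H.
    destruct p as [v l|f]; simpl in *; auto; [|discriminate].
    apply nth_error_Some in H. apply nth_error_Some. lia.
  - specialize (H (k - n) ltac:(lia)). rewrite idx_shiftn in H. now replace (n + (k - n)) with k in H by lia.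
Qed.

Lemma len_ge_concat (m q : P) j : (exists v l, m = Fin v l) -> len_ge q j -> len_ge (concat m q) (plen m + j).
Proof.
  intros Hm. rewrite !len_ge_idx. intros H k Hk. rewrite idx_concat_gen by auto.
  destruct (Nat.ltb_spec k (plen m)).
  - destruct Hm as (v & l & ->). simpl in *. apply nth_error_Some; auto.
  - apply H. lia.
Qed.

Lemma len_ge_pre (p : P) n m : len_ge p n -> m <= n -> len_ge (pre n p) m.
Proof. intros H Hm. destruct (pre_fin p n) as (v & l & E1). pose proof (plen_pre H) as E2.
  rewrite E1 in *. simpl in *. lia. Qed.

Lemma pre_pre (p : P) a b : pre a (pre b p) = pre (Nat.min a b) p.
Proof.
  apply path_ext; [now rewrite !srcp_pre|]. intros k. rewrite !idx_pre.
  destruct (Nat.ltb_spec k a), (Nat.ltb_spec k b), (Nat.ltb_spec k (Nat.min a b)); auto; lia.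
Qed.

Lemma pre_eq_le (x z : P) n m : pre n z = pre n x -> m <= n -> pre m z = pre m x.
Proof. intros H Hm. replace m with (Nat.min m n) by lia. rewrite <- !pre_pre, H. reflexivity. Qed.

Lemma pre_concat (m q : P) n : is_finpath m -> srcp q = rng m -> n <= plen m ->
  pre n (concat m q) = pre n m.
Proof.
  intros Hm Hs Hn. apply path_ext.
  - rewrite !srcp_pre. apply srcp_concat; auto.
  - intros k. rewrite !idx_pre. destruct (Nat.ltb_spec k n); auto.
    rewrite idx_concat_gen. + destruct (Nat.ltb_spec k (plen m)); auto; lia.
    + destruct m; [eauto|contradiction].
Qed.

Lemma pre_all (m : P) : is_finpath m -> pre (plen m) m = m.
Proof. destruct m as [v l|f]; [|intros []]. intros _. simpl. now rewrite firstn_all. Qed.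

Lemma pre_S_shift (z : P) n : len_ge z 1 ->
  pre (S n) z = concat (pre 1 z) (pre n (shift1 z)).
Proof.
  intros Hz. apply path_ext.
  - rewrite srcp_pre. destruct z as [v [|e l]|f]; simpl; auto.
  - intros k. rewrite idx_concat_gen by apply pre_fin. rewrite (plen_pre Hz).
    rewrite !idx_pre. destruct k as [|k]; simpl; auto.
    rewrite idx_shift1. rewrite Nat.sub_0_r. reflexivity.
Qed.

Lemma cyl_iff (m z : P) : is_finpath m ->
  (cyl m z <-> boundary z /\ len_ge z (plen m) /\ pre (plen m) z = m).
Proof.
  intros Hm. split.
  - intros (x & Hx & Hs & ->). split; [apply boundary_concat; auto|]. split.
    + rewrite <- (Nat.add_0_r (plen m)). apply len_ge_concat; [|destruct x; simpl; auto; lia].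
      destruct m; [eauto|contradiction].
    + rewrite pre_concat; auto. apply pre_all; auto.
  - intros (Hb & Hl & Hp). exists (shiftn (plen m) z). split; [apply boundary_shiftn; auto|].
    split.
    + rewrite srcp_shiftn_rng; auto. congruence.
    + transitivity (concat (pre (plen m) z) (shiftn (plen m) z)); [symmetry; apply decomp|now rewrite Hp].
Qed.

Arguments cyl_iff {m z} _.

Definition snoc (m : P) (e : edge E) : P := concat m (Fin (gs e) [e]).

Lemma finpath_snoc (m : P) e : is_finpath m -> gs e = rng m -> is_finpath (snoc m e).
Proof.
  destruct m as [v l|f]; [|intros []]. intros Hm He. unfold snoc. simpl.
  apply finpath_chain. apply finpath_chain in Hm.
  change (chain (concat (Fin v l) (Fin (gs e) [e]))). apply chain_concat; auto.
  apply finpath_chain. simpl. auto.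
Qed.

Lemma plen_snoc (m : P) e : (exists v l, m = Fin v l) -> plen (snoc m e) = S (plen m).
Proof. intros (v & l & ->). simpl. rewrite length_app. simpl. lia. Qed.

Definition NB (mu : P) (F : list (edge E)) (x : P) : Prop :=
  is_finpath mu /\ (forall e, In e F -> gs e = rng mu) /\ basic mu F x.



Lemma basic_boundary (m : P) F z : is_finpath m -> basic m F z -> boundary z.
Proof. intros Hm [Hc _]. apply (cyl_iff Hm) in Hc. tauto. Qed.

Lemma BSUB (mu : P) F x n : NB mu F x -> S (plen mu) <= n -> len_ge x n ->
  forall z, boundary z -> len_ge z n -> pre n z = pre n x -> basic mu F z.
Proof.
  intros (Hm & HF & Hc & Hn) Hle Hx z Hz Hzl Hp.
  assert (Hmf : exists v l, mu = Fin v l) by (destruct mu; [eauto|contradiction]).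
  apply (cyl_iff Hm) in Hc as (Hxb & Hxl & Hxp).
  split.
  - apply cyl_iff; auto. split; auto. split; [eapply len_ge_le; eauto; lia|].
    rewrite <- Hxp at 2. apply (pre_eq_le _ _ Hp). lia.
  - intros e He Hce. apply (Hn e He).
    assert (Hs : is_finpath (snoc mu e)) by (apply finpath_snoc; auto).
    apply (cyl_iff Hs) in Hce as (_ & Hzl' & Hzp).
    change (cyl (snoc mu e) x). apply (cyl_iff Hs). rewrite plen_snoc in * by auto.
    split; auto. split; [eapply len_ge_le; eauto|].
    rewrite <- Hzp. symmetry. apply (pre_eq_le _ _ Hp). lia.
Qed.

Lemma NB_cyl (x : P) n : boundary x -> len_ge x n -> NB (pre n x) [] x.
Proof.
  intros Hb Hl. split; [apply finpath_pre; auto|]. split; [simpl; tauto|]. split; [|simpl; tauto].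
  apply cyl_iff; [apply finpath_pre; auto|]. rewrite plen_pre; auto.
Qed.

Lemma basic_cyl_pre (x z : P) n : boundary x -> len_ge x n -> basic (pre n x) [] z ->
  boundary z /\ len_ge z n /\ pre n z = pre n x.
Proof.
  intros Hb Hl [Hc _]. apply cyl_iff in Hc; [|apply finpath_pre; auto]. rewrite plen_pre in Hc; auto.
Qed.

Lemma NB_basic (mu : P) F x : NB mu F x -> basic mu F x.
Proof. intros (_ & _ & H); exact H. Qed.

Lemma INT (m1 m2 : P) F1 F2 x : NB m1 F1 x -> NB m2 F2 x ->
  exists m F, NB m F x /\ forall z, basic m F z -> basic m1 F1 z /\ basic m2 F2 z.
Proof.
  intros H1 H2.
  pose proof H1 as (Hm1 & HF1 & Hc1 & Hn1). pose proof H2 as (Hm2 & HF2 & Hc2 & Hn2).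
  apply (cyl_iff Hm1) in Hc1 as (Hxb & Hl1 & Hp1).
  apply (cyl_iff Hm2) in Hc2 as (_ & Hl2 & Hp2).
  destruct (lt_eq_lt_dec (plen m1) (plen m2)) as [[Hlt|Heq]|Hlt].
  - exists m2, F2. split; auto. intros z Hz. split; auto.
    pose proof (basic_boundary Hm2 Hz) as Hzb.
    destruct Hz as [Hz _]. apply (cyl_iff Hm2) in Hz as (_ & Hzl & Hzp).
    eapply BSUB; eauto. congruence.
  - assert (m1 = m2) by (rewrite <- Hp1, <- Hp2, Heq; reflexivity). subst m2.
    exists m1, (F1 ++ F2). split.
    + split; auto. split. { intros e He. apply in_app_or in He as [He|He]; auto. }
      split; [apply cyl_iff; auto|]. intros e He. apply in_app_or in He as [He|He]; auto.
    + intros z [Hz Hn]. split; split; auto; intros e He; apply Hn; apply in_or_app; auto.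
  - exists m1, F1. split; auto. intros z Hz. split; auto.
    pose proof (basic_boundary Hm1 Hz) as Hzb.
    destruct Hz as [Hz _]. apply (cyl_iff Hm1) in Hz as (_ & Hzl & Hzp).
    eapply BSUB; eauto. congruence.
Qed.


Lemma pre_char (p q : P) n : (exists v l, q = Fin v l) -> plen q = n ->
  (pre n p = q <-> srcp p = srcp q /\ forall k, k < n -> idx p k = idx q k).
Proof.
  intros Hq Hn. split.
  - intros <-. split; [now rewrite srcp_pre|]. intros k Hk. rewrite idx_pre.
    destruct (Nat.ltb_spec k n); auto; lia.
  - intros [Hs Hi]. apply path_ext; [now rewrite srcp_pre|]. intros k. rewrite idx_pre.
    destruct (Nat.ltb_spec k n); auto.
    destruct Hq as (v & l & ->). simpl in *. symmetry. apply nth_error_None. lia.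
Qed.

Lemma finpath_fin (m : P) : is_finpath m -> exists v l, m = Fin v l.
Proof. destruct m; [eauto|intros []]. Qed.

Lemma finpath_idx (m : P) k : is_finpath m -> k < plen m -> idx m k <> None.
Proof. destruct m as [v l|f]; [|intros []]. simpl. intros _ H. apply nth_error_Some; auto. Qed.

Lemma cyl_char (m z : P) : is_finpath m ->
  (cyl m z <-> boundary z /\ srcp z = srcp m /\ forall k, k < plen m -> idx z k = idx m k).
Proof.
  intros Hm. rewrite (cyl_iff Hm). rewrite pre_char by (auto using finpath_fin). split.
  - tauto.
  - intros (H1 & H2 & H3). split; auto. split; auto.
    apply len_ge_idx. intros k Hk. rewrite H3 by auto. apply finpath_idx; auto.
Qed.

Arguments cyl_char {m} z _.
Arguments finpath_snoc {m e} _ _.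
Arguments finpath_fin {m} _.

Lemma idx_snoc (m : P) e k : (exists v l, m = Fin v l) ->
  idx (snoc m e) k = if k <? plen m then idx m k else if k =? plen m then Some e else None.
Proof.
  intros Hm. unfold snoc. rewrite idx_concat_gen by auto.
  destruct (Nat.ltb_spec k (plen m)); auto.
  destruct (Nat.eqb_spec k (plen m)).
  - subst. rewrite Nat.sub_diag. reflexivity.
  - simpl. destruct (k - plen m) as [|[|j]] eqn:?; simpl; auto; lia.
Qed.

Lemma srcp_snoc (m : P) e : (exists v l, m = Fin v l) -> srcp (snoc m e) = srcp m.
Proof. intros (v & l & ->). reflexivity. Qed.

Definition validF (m : P) (F : list (edge E)) := forall e, In e F -> gs e = rng m.

Lemma basic_char (m : P) F z : is_finpath m -> validF m F ->
  (basic m F z <-> boundary z /\ srcp z = srcp m /\ (forall k, k < plen m -> idx z k = idx m k)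
     /\ forall e, In e F -> idx z (plen m) <> Some e).
Proof.
  intros Hm HF. pose proof (finpath_fin Hm) as Hf. unfold basic. rewrite (cyl_char z Hm).
  split.
  - intros ((H1 & H2 & H3) & H4). split; auto. split; auto. split; auto.
    intros e He Hz. apply (H4 e He). change (cyl (snoc m e) z).
    rewrite (cyl_char z (finpath_snoc Hm (HF e He))). rewrite plen_snoc, srcp_snoc by auto.
    split; auto. split; auto. intros k Hk. rewrite idx_snoc by auto.
    destruct (Nat.ltb_spec k (plen m)); auto. replace k with (plen m) by lia.
    rewrite Nat.eqb_refl; auto.
  - intros (H1 & H2 & H3 & H4). split; [tauto|]. intros e He Hc. apply (H4 e He).
    change (cyl (snoc m e) z) in Hc.
    rewrite (cyl_char z (finpath_snoc Hm (HF e He))) in Hc. rewrite plen_snoc, srcp_snoc in Hc by auto.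
    destruct Hc as (_ & _ & Hc). rewrite Hc by lia. rewrite idx_snoc by auto.
    rewrite Nat.ltb_irrefl, Nat.eqb_refl. reflexivity.
Qed.

End G.

Arguments idx {E} p n.
Arguments pre {E} n p.
Arguments NB {E} mu F x.
Arguments validF {E} m F.
Arguments snoc {E} m e.
Arguments chain {E} p.
Arguments basic_char {E m F z} _ _.
Arguments plen_pre {E p n} _.
Arguments cyl_iff {E m z} _.
Arguments cyl_char {E m} z _.
Arguments finpath_snoc {E m e} _ _.
Arguments finpath_fin {E m} _.

Definition LC {E : graph} {T : Type} (D : path E -> Prop) (g : path E -> T) : Prop :=
  forall x, D x -> exists mu F, NB mu F x /\ forall z, basic mu F z -> D z -> g z = g x.

Definition CT {E E' : graph} (D : path E -> Prop) (f : path E -> path E') : Prop :=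
  forall x, D x -> forall mu' F', NB mu' F' (f x) ->
    exists mu F, NB mu F x /\ forall z, basic mu F z -> D z -> basic mu' F' (f z).

Section LCT.
Variables E E' E'' : graph.

Lemma NB_self (mu : path E) F z : NB mu F z -> forall y, basic mu F y -> NB mu F y.
Proof. intros (H1 & H2 & _) y Hy. split; auto. Qed.

Lemma LC_mono {T} (D D' : path E -> Prop) (g : path E -> T) :
  (forall x, D' x -> D x) -> LC D g -> LC D' g.
Proof.
  intros H HL x Hx. destruct (HL x (H x Hx)) as (mu & F & HN & Hg).
  exists mu, F. split; auto.
Qed.

Lemma LC_ext {T} (D : path E -> Prop) (g g' : path E -> T) :
  (forall x, D x -> g x = g' x) -> LC D g -> LC D g'.
Proof.
  intros H HL x Hx. destruct (HL x Hx) as (mu & F & HN & Hg).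
  exists mu, F. split; auto. intros z Hz HzD. rewrite <- !H by auto. auto.
Qed.

Lemma LC_map {T U} (D : path E -> Prop) (g : path E -> T) (h : T -> U) :
  LC D g -> LC D (fun x => h (g x)).
Proof.
  intros HL x Hx. destruct (HL x Hx) as (mu & F & HN & Hg).
  exists mu, F. split; auto. intros z Hz HzD. now rewrite Hg.
Qed.

Lemma LC_const {T} (D : path E -> Prop) (c : T) : (forall x, D x -> boundary x) -> LC D (fun _ => c).
Proof.
  intros HD x Hx. exists (pre 0 x), nil. split; [apply NB_cyl; auto; simpl; destruct x; simpl; auto; lia|].
  auto.
Qed.

Lemma LC_pair {T U} (D : path E -> Prop) (f : path E -> T) (g : path E -> U) :
  LC D f -> LC D g -> LC D (fun x => (f x, g x)).
Proof.
  intros Hf Hg x Hx. destruct (Hf x Hx) as (m1 & F1 & H1 & K1).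
  destruct (Hg x Hx) as (m2 & F2 & H2 & K2).
  destruct (INT H1 H2) as (m & F & HN & HI). exists m, F. split; auto.
  intros z Hz HzD. destruct (HI z Hz). rewrite K1, K2; auto.
Qed.

Lemma LC_dep {T U} (D : path E -> Prop) (f : path E -> T) (g : T -> path E -> U) :
  LC D f -> (forall c, LC (fun x => D x /\ f x = c) (g c)) -> LC D (fun x => g (f x) x).
Proof.
  intros Hf Hg x Hx. destruct (Hf x Hx) as (m1 & F1 & H1 & K1).
  destruct (Hg (f x) x (conj Hx eq_refl)) as (m2 & F2 & H2 & K2).
  destruct (INT H1 H2) as (m & F & HN & HI). exists m, F. split; auto.
  intros z Hz HzD. destruct (HI z Hz). assert (f z = f x) by auto. rewrite H3. apply K2; auto.
Qed.

Lemma LC_comp {T} (D : path E -> Prop) (D' : path E' -> Prop) (f : path E -> path E') (g : path E' -> T) :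
  CT D f -> LC D' g -> (forall x, D x -> D' (f x)) -> LC D (fun x => g (f x)).
Proof.
  intros Hf Hg HD x Hx. destruct (Hg (f x) (HD x Hx)) as (m' & F' & H' & K').
  destruct (Hf x Hx m' F' H') as (m & F & HN & K). exists m, F. split; auto.
Qed.

Lemma CT_comp (D : path E -> Prop) (D' : path E' -> Prop) (f : path E -> path E') (g : path E' -> path E'') :
  CT D f -> CT D' g -> (forall x, D x -> D' (f x)) -> CT D (fun x => g (f x)).
Proof.
  intros Hf Hg HD x Hx m'' F'' H''. destruct (Hg (f x) (HD x Hx) m'' F'' H'') as (m' & F' & H' & K').
  destruct (Hf x Hx m' F' H') as (m & F & HN & K). exists m, F. split; auto.
Qed.

Lemma CT_mono (D D' : path E -> Prop) (f : path E -> path E') :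
  (forall x, D' x -> D x) -> CT D f -> CT D' f.
Proof.
  intros H Hf x Hx m' F' H'. destruct (Hf x (H x Hx) m' F' H') as (m & F & HN & K).
  exists m, F. split; auto.
Qed.

Lemma CT_ext (D : path E -> Prop) (f g : path E -> path E') :
  (forall x, D x -> f x = g x) -> CT D f -> CT D g.
Proof.
  intros H Hf x Hx m' F' H'. rewrite <- H in H' by auto.
  destruct (Hf x Hx m' F' H') as (m & F & HN & K).
  exists m, F. split; auto. intros z Hz HzD. rewrite <- H; auto.
Qed.

Lemma CT_id (D : path E -> Prop) : CT D (fun x => x).
Proof. intros x Hx m F H. exists m, F. split; auto. Qed.

Lemma LC_pre n : LC (fun z : path E => boundary z /\ len_ge z n) (pre n).
Proof.
  intros x [Hb Hl]. exists (pre n x), nil. split; [apply NB_cyl; auto|].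
  intros z Hz _. apply basic_cyl_pre in Hz; tauto.
Qed.

End LCT.

Section CTs.
Variable E : graph.
Notation P := (path E).

Lemma len_ge_S_idx (p : P) n : len_ge p (S n) -> idx p n <> None.
Proof. rewrite len_ge_idx. intros H. apply H. lia. Qed.

Lemma chain_of (p : P) : boundary p -> chain p.
Proof. intros H; apply boundary_iff in H; tauto. Qed.

Lemma CT_shift1 : CT (@bdry_ge1 E) (@shift1 E).
Proof.
  intros x [Hb Hl] m' F' (Hm' & HF' & Hbas).
  pose proof Hbas as Hbas'.
  apply (basic_char Hm' HF') in Hbas as (Hsb & Hss & Hsi & HsF).
  set (n' := plen m').
  assert (Hxl : len_ge x (S n')).
  { apply len_ge_idx. intros k Hk. destruct k as [|k].
    - apply len_ge_S_idx; auto.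
    - rewrite <- idx_shift1, Hsi by lia. apply finpath_idx; auto. unfold n' in *; lia. }
  assert (Hrng : rng (pre (S n') x) = rng m').
  { rewrite <- srcp_shiftn_rng by auto. rewrite shiftn_S'. rewrite srcp_shiftn_rng by auto.
    destruct Hbas' as [Hc _]. apply (cyl_iff Hm') in Hc. f_equal. tauto. }
  destruct (idx x 0) as [e0|] eqn:He0; [|exfalso; exact (len_ge_S_idx x 0 Hl He0)].
  assert (HvF : validF (pre (S n') x) F') by (intros e He; rewrite Hrng; auto).
  assert (Hpf : is_finpath (pre (S n') x)) by (apply finpath_pre; auto).
  exists (pre (S n') x), F'. split.
  - split; auto. split; auto. apply (basic_char Hpf HvF). rewrite (plen_pre Hxl).
    split; auto. split; [now rewrite srcp_pre|]. split.
    + intros k Hk. rewrite idx_pre. destruct (Nat.ltb_spec k (S n')); auto; lia.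
    + intros e He. rewrite <- idx_shift1. auto.
  - intros z Hz [Hzb Hzl]. apply (basic_char Hpf HvF) in Hz as (_ & Hzs & Hzi & HzF).
    rewrite (plen_pre Hxl) in Hzi, HzF. rewrite srcp_pre in Hzs.
    assert (Hzi' : forall k, k < S n' -> idx z k = idx x k).
    { intros k Hk. rewrite Hzi by auto. rewrite idx_pre. destruct (Nat.ltb_spec k (S n')); auto; lia. }
    apply (basic_char Hm' HF'). split; [apply boundary_shift1; auto|]. split.
    + rewrite (srcp_shift1 (chain_of Hzb) (e:=e0)). rewrite <- (srcp_shift1 (chain_of Hb) He0). auto.
      rewrite Hzi'; auto; lia.
    + split.
      * intros k Hk. rewrite idx_shift1, Hzi' by lia. rewrite <- idx_shift1. auto.
      * intros e He. rewrite idx_shift1. auto.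
Qed.

Lemma CT_shiftn n : CT (fun z : P => boundary z /\ len_ge z n) (shiftn n).
Proof.
  induction n.
  - apply CT_id.
  - intros x Hx. apply (CT_comp (D' := @bdry_ge1 E) (f := shiftn n) (g := @shift1 E)).
    + apply (CT_mono (D := fun z => boundary z /\ len_ge z n)); auto.
      intros z [H1 H2]. split; auto. eapply len_ge_le; eauto.
    + apply CT_shift1.
    + intros z [H1 H2]. split; [apply boundary_shiftn; auto|]. apply len_ge_shiftn.
      replace (n + 1) with (S n) by lia. auto.
    + auto.
Qed.

Lemma CT_concat (m : P) : is_finpath m ->
  CT (fun w => boundary w /\ srcp w = rng m) (concat m).
Proof.
  intros Hm w [Hwb Hws] m' F' (Hm' & HF' & Hbas).
  pose proof Hbas as Hbas'.
  apply (basic_char Hm' HF') in Hbas as (Hcb & Hcs & Hci & HcF).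
  destruct (finpath_fin Hm) as (v & l & Em).
  set (n := plen m) in *. set (n' := plen m') in *.
  assert (Hic : forall k, idx (concat m w) k = if k <? n then idx m k else idx w (k - n)).
  { intros k. apply idx_concat_gen; eauto. }
  assert (Hwl : len_ge w (n' - n)).
  { apply len_ge_idx. intros j Hj. specialize (Hci (n + j) ltac:(unfold n' in *; lia)).
    rewrite Hic in Hci. destruct (Nat.ltb_spec (n + j) n); [lia|].
    replace (n + j - n) with j in Hci by lia. rewrite Hci. apply finpath_idx; auto. unfold n' in *; lia. }
  set (F := if n <=? n' then F' else nil).
  assert (Hpf : is_finpath (pre (n' - n) w)) by (apply finpath_pre; auto).
  assert (HvF : validF (pre (n' - n) w) F).
  { unfold F. destruct (Nat.leb_spec n n'); [|intros e []].
    intros e He. rewrite HF' by auto.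
    destruct Hbas' as [Hc _]. apply (cyl_iff Hm') in Hc as (_ & _ & Hp).
    rewrite <- Hp. rewrite <- !srcp_shiftn_rng by (auto; apply boundary_concat; auto).
    replace (plen m') with ((n' - n) + n) by (unfold n, n' in *; lia). rewrite shiftn_add. f_equal. f_equal.
    subst m. apply shift_concat. auto. }
  exists (pre (n' - n) w), F. split.
  - split; auto. split; auto. apply (basic_char Hpf HvF). rewrite (plen_pre Hwl).
    split; auto. split; [now rewrite srcp_pre|]. split.
    + intros k Hk. rewrite idx_pre. destruct (Nat.ltb_spec k (n' - n)); auto; lia.
    + unfold F. destruct (Nat.leb_spec n n'); [|intros e []].
      intros e He. specialize (HcF e He). rewrite Hic in HcF.
      destruct (Nat.ltb_spec n' n); [lia|]. auto.
  - intros z Hz [Hzb Hzs]. apply (basic_char Hpf HvF) in Hz as (_ & Hzs' & Hzi & HzF).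
    rewrite (plen_pre Hwl) in Hzi, HzF. rewrite srcp_pre in Hzs'.
    assert (Hicz : forall k, idx (concat m z) k = if k <? n then idx m k else idx z (k - n)).
    { intros k. apply idx_concat_gen; eauto. }
    apply (basic_char Hm' HF'). split; [apply boundary_concat; auto|]. split.
    + rewrite srcp_concat by auto. rewrite <- Hcs. rewrite srcp_concat; auto.
    + split.
      * intros k Hk. rewrite <- Hci by auto. rewrite Hicz, Hic.
        destruct (Nat.ltb_spec k n); auto. rewrite Hzi. rewrite idx_pre.
        destruct (Nat.ltb_spec (k - n) (n' - n)); auto; lia. unfold n' in *; lia.
      * intros e He. rewrite Hicz. change (plen m') with n'. specialize (HcF e He). rewrite Hic in HcF.
        destruct (Nat.ltb_spec n' n); auto.
        apply HzF. unfold F. destruct (Nat.leb_spec n n'); auto; lia.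
Qed.

End CTs.

Arguments basic_boundary {E m F z} _ _.
Arguments NB_self {E mu F z} _ y _.

Lemma basic_open {E : graph} (mu : path E) F : is_finpath mu -> validF mu F -> bopen (basic mu F).
Proof.
  intros Hm HF. split.
  - intros y Hy. exact (basic_boundary Hm Hy).
  - intros y Hy. exists mu, F. auto.
Qed.
Arguments basic_open {E mu F} _ _.

Section Bridges.
Variables E E' : graph.

Lemma cont_LC {T} (D : path E -> Prop) (g : path E -> T) :
  cont_on (@bopen E) (@discrete_open T) D g -> LC D g.
Proof.
  intros Hc x Hx. destruct (Hc (fun t => t = g x) I) as (U & [HU1 HU2] & HUe).
  assert (HUx : U x) by (apply HUe; auto).
  destruct (HU2 x HUx) as (mu & F & Hm & HF & Hb & Hsub).
  exists mu, F. split; [split; auto|]. intros z Hz HzD. apply HUe; auto.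
Qed.

Lemma LC_cont {T} (D : path E -> Prop) (g : path E -> T) :
  LC D g -> cont_on (@bopen E) (@discrete_open T) D g.
Proof.
  intros HL V _.
  exists (fun y => exists mu F, NB mu F y /\ forall z, basic mu F z -> D z -> V (g z)).
  split; [split|].
  - intros y (mu & F & (Hm & _ & Hb) & _). exact (basic_boundary Hm Hb).
  - intros y (mu & F & HN & Hall). exists mu, F. destruct HN as (Hm & HF & Hb).
    split; auto. split; auto. split; auto. intros z Hz. exists mu, F. split; auto.
    split; auto.
  - intros x Hx. split.
    + intros (mu & F & HN & Hall). apply Hall; auto. apply NB_basic; auto.
    + intros HV. destruct (HL x Hx) as (mu & F & HN & Hg). exists mu, F. split; auto.
      intros z Hz HzD. rewrite Hg; auto.
Qed.

Lemma cont_CT (f : path E -> path E') :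
  cont_on (@bopen E) (@bopen E') (@boundary E) f -> CT (@boundary E) f.
Proof.
  intros Hc x Hx m' F' (Hm' & HF' & Hb').
  destruct (Hc (basic m' F') (basic_open Hm' HF')) as (U & [HU1 HU2] & HUe).
  assert (HUx : U x) by (apply HUe; auto).
  destruct (HU2 x HUx) as (mu & F & Hm & HF & Hb & Hsub).
  exists mu, F. split; [split; auto|]. intros z Hz HzD. apply HUe; auto.
Qed.

Lemma LCs_cont {T} (a : sg E * path E -> T) :
  (forall s, LC (fun x => star_dom (s, x)) (fun x => a (s, x))) ->
  cont_on (prod_open (@discrete_open (sg E)) (@bopen E)) (@discrete_open T) (@star_dom E) a.
Proof.
  intros HL V _.
  exists (fun p => exists mu F, NB mu F (snd p) /\
            forall z, basic mu F z -> star_dom (fst p, z) -> V (a (fst p, z))).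
  split.
  - intros [s x] (mu & F & HN & Hall). simpl in *.
    exists (fun s' => s' = s), (basic mu F). destruct HN as (Hm & HF & Hb).
    split; [exact I|]. split; [apply basic_open; auto|]. split; auto. split; auto.
    intros s' y -> Hy. exists mu, F. simpl. split; auto. split; auto.
  - intros [s x] Hx. simpl. split.
    + intros (mu & F & HN & Hall). apply Hall; auto. apply NB_basic; auto.
    + intros HV. destruct (HL s x Hx) as (mu & F & HN & Hg). exists mu, F. split; auto.
      intros z Hz HzD. rewrite Hg; auto.
Qed.

Lemma cont_LCs {T} (a : sg E * path E -> T) :
  cont_on (prod_open (@discrete_open (sg E)) (@bopen E)) (@discrete_open T) (@star_dom E) a ->
  forall s, LC (fun x => star_dom (s, x)) (fun x => a (s, x)).
Proof.
  intros Hc s x Hx. destruct (Hc (fun t => t = a (s, x)) I) as (W & HW & HWe).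
  assert (HWx : W (s, x)) by (apply HWe; auto).
  destruct (HW (s, x) HWx) as (A & U & _ & [HU1 HU2] & HA & HU & Hrect). simpl in *.
  destruct (HU2 x HU) as (mu & F & Hm & HF & Hb & Hsub).
  exists mu, F. split; [split; auto|]. intros z Hz HzD.
  apply (HWe (s, z)); auto.
Qed.

End Bridges.

Section Rel.
Variable E : graph.
Notation P := (path E).

Definition R (u : P) p (w : P) q : Prop := len_ge u p /\ len_ge w q /\ shiftn p u = shiftn q w.

Lemma R_refl (u : P) : R u 0 u 0.
Proof. split; [|split]; auto; destruct u; simpl; auto; lia. Qed.

Lemma R_sym (u w : P) p q : R u p w q -> R w q u p.
Proof. intros (H1 & H2 & H3); split; auto. Qed.

Lemma len_ge_add (u : P) p j : len_ge u p -> len_ge (shiftn p u) j -> len_ge u (p + j).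
Proof.
  destruct u as [v l|f]; simpl; auto. rewrite shiftn_Fin. simpl. rewrite length_skipn. lia.
Qed.

Lemma R_len (u w : P) p q j : R u p w q -> len_ge w (q + j) -> len_ge u (p + j).
Proof.
  intros (H1 & H2 & H3) Hw. apply len_ge_add; auto. rewrite H3. apply len_ge_shiftn; auto.
Qed.

Arguments R_len {u w p q j} _ _.
Arguments R_sym {u w p q} _.

Lemma R_comp (u w z : P) p1 q1 p2 q2 : R u p1 w q1 -> R w p2 z q2 ->
  R u (p1 + (p2 - q1)) z (q2 + (q1 - p2)).
Proof.
  intros H1 H2. pose proof H1 as (A1 & B1 & C1). pose proof H2 as (A2 & B2 & C2).
  destruct (Nat.leb_spec q1 p2).
  - replace (q1 - p2) with 0 by lia. rewrite Nat.add_0_r. split; [|split]; auto.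
    + apply (R_len H1). replace (q1 + (p2 - q1)) with p2 by lia. auto.
    + rewrite Nat.add_comm, shiftn_add, C1, <- shiftn_add. replace (p2 - q1 + q1) with p2 by lia. auto.
  - replace (p2 - q1) with 0 by lia. rewrite Nat.add_0_r. split; [|split]; auto.
    + apply (R_len (R_sym H2)). replace (p2 + (q1 - p2)) with q1 by lia. auto.
    + rewrite (Nat.add_comm q2), shiftn_add, <- C2, <- shiftn_add. replace (q1 - p2 + p2) with q1 by lia. auto.
Qed.

End Rel.
Arguments R {E} u p w q.
Arguments R_len {E u w p q j} _ _.
Arguments R_sym {E u w p q} _.
Arguments R_comp {E u w z p1 q1 p2 q2} _ _.

Section Coc.
Variables E F : graph.
Variable phi : path E -> path F.
Variables k l : path E -> nat.
Hypothesis Hphi : forall x, boundary x -> boundary (phi x).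
Hypothesis Hcoc : forall x, bdry_ge1 x -> R (phi (shift1 x)) (k x) (phi x) (l x).
Hypothesis Hk : LC (@bdry_ge1 E) k.
Hypothesis Hl : LC (@bdry_ge1 E) l.
Hypothesis Hct : CT (@boundary E) phi.

Fixpoint KL (n : nat) (z : path E) : nat * nat :=
  match n with
  | 0 => (0, 0)
  | S n => let (K, L) := KL n z in
           let a := k (shiftn n z) in let b := l (shiftn n z) in
           (a + (K - b), L + (b - K))
  end.

Lemma KL_R n z : boundary z -> len_ge z n -> R (phi (shiftn n z)) (fst (KL n z)) (phi z) (snd (KL n z)).
Proof.
  induction n; intros Hb Hl0.
  - apply R_refl.
  - simpl. destruct (KL n z) as [K L] eqn:EK. simpl in IHn.
    assert (H1 : R (phi (shift1 (shiftn n z))) (k (shiftn n z)) (phi (shiftn n z)) (l (shiftn n z))).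
    { apply Hcoc. split; [apply boundary_shiftn; auto|]. apply len_ge_shiftn.
      replace (n + 1) with (S n) by lia. auto. }
    exact (R_comp H1 (IHn Hb (len_ge_le z (m:=n) Hl0 (Nat.le_succ_diag_r n)))).
Qed.

Lemma LC_kshift n (g : path E -> nat) : LC (@bdry_ge1 E) g ->
  LC (fun z => boundary z /\ len_ge z (S n)) (fun z => g (shiftn n z)).
Proof.
  intros Hg. apply (LC_comp (D' := @bdry_ge1 E)).
  - apply (CT_mono (D := fun z => boundary z /\ len_ge z n)); [|apply CT_shiftn].
    intros z [H1 H2]; split; auto. eapply len_ge_le; eauto.
  - auto.
  - intros z [H1 H2]. split; [apply boundary_shiftn; auto|]. apply len_ge_shiftn.
    replace (n + 1) with (S n) by lia. auto.
Qed.

Lemma KL_LC n : LC (fun z => boundary z /\ len_ge z n) (KL n).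
Proof.
  induction n.
  - apply LC_const. tauto.
  - set (h := fun (t : (nat * nat) * (nat * nat)) =>
               let '((K, L), (a, b)) := t in (a + (K - b), L + (b - K))).
    apply (LC_ext (g := fun z => h (KL n z, (k (shiftn n z), l (shiftn n z))))).
    + intros z _. simpl. destruct (KL n z); reflexivity.
    + apply LC_map. apply LC_pair.
      * apply (LC_mono (D := fun z => boundary z /\ len_ge z n)); auto.
        intros z [H1 H2]; split; auto. eapply len_ge_le; eauto.
      * apply LC_pair; apply LC_kshift; auto.
Qed.


Lemma theta_facts (mu nu x : path E) : in_sg (Some (mu, nu)) -> cyl nu x ->
  boundary x /\ len_ge x (plen nu) /\ boundary (shiftn (plen nu) x) /\
  srcp (shiftn (plen nu) x) = rng mu /\
  boundary (theta (Some (mu, nu)) x) /\ len_ge (theta (Some (mu, nu)) x) (plen mu) /\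
  shiftn (plen mu) (theta (Some (mu, nu)) x) = shiftn (plen nu) x.
Proof.
  intros (Hm & Hn & Hr) Hc. apply (cyl_iff Hn) in Hc as (Hb & Hl0 & Hp).
  assert (Hy : boundary (shiftn (plen nu) x)) by (apply boundary_shiftn; auto).
  assert (Hs : srcp (shiftn (plen nu) x) = rng mu) by (rewrite srcp_shiftn_rng, Hp; auto).
  change (theta (Some (mu, nu)) x) with (concat mu (shiftn (plen nu) x)).
  split; auto. split; auto. split; auto. split; auto. split; [apply boundary_concat; auto|]. split.
  - rewrite <- (Nat.add_0_r (plen mu)). apply len_ge_concat; [apply finpath_fin; auto|].
    destruct (shiftn (plen nu) x); simpl; auto; lia.
  - destruct (finpath_fin Hm) as (v & l' & ->). apply shift_concat. auto.
Qed.

Definition PQ (s : sg E) (x : path E) : nat * nat :=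
  match s with
  | Some (mu, nu) =>
      let (K1, L1) := KL (plen nu) x in
      let (K2, L2) := KL (plen mu) (theta s x) in
      (L2 + (K1 - K2), L1 + (K2 - K1))
  | None => (0, 0)
  end.

Lemma PQ_R (mu nu x : path E) : in_sg (Some (mu, nu)) -> cyl nu x ->
  R (phi (theta (Some (mu, nu)) x)) (fst (PQ (Some (mu, nu)) x)) (phi x) (snd (PQ (Some (mu, nu)) x)).
Proof.
  intros Hs Hc. destruct (theta_facts Hs Hc) as (Hb & Hl0 & Hy & Hys & Ht & Htl & Hsh).
  pose proof (@KL_R (plen nu) x Hb Hl0) as R1. pose proof (@KL_R (plen mu) _ Ht Htl) as R2. rewrite Hsh in R2.
  unfold PQ. destruct (KL (plen nu) x) as [K1 L1]. destruct (KL (plen mu) (theta (Some (mu, nu)) x)) as [K2 L2].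
  simpl in *. exact (R_comp (R_sym R2) R1).
Qed.

Definition afw (p : sg E * path E) : sg F :=
  match fst p with
  | None => None
  | Some _ => Some (pre (fst (PQ (fst p) (snd p))) (phi (theta (fst p) (snd p))),
                    pre (snd (PQ (fst p) (snd p))) (phi (snd p)))
  end.

Lemma afw_eq (mu nu x : path E) : afw (Some (mu, nu), x) =
  Some (pre (fst (PQ (Some (mu, nu)) x)) (phi (theta (Some (mu, nu)) x)), pre (snd (PQ (Some (mu, nu)) x)) (phi x)).
Proof. reflexivity. Qed.

Lemma CT_theta (mu nu : path E) : in_sg (Some (mu, nu)) ->
  CT (fun x => star_dom (Some (mu, nu), x)) (theta (Some (mu, nu))).
Proof.
  intros Hs. pose proof Hs as (Hm & Hn & Hr).
  apply (CT_comp (D' := fun w => boundary w /\ srcp w = rng mu) (f := shiftn (plen nu)) (g := concat mu)).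
  - apply (CT_mono (D := fun z => boundary z /\ len_ge z (plen nu))); [|apply CT_shiftn].
    intros x [_ Hc]. destruct (theta_facts Hs Hc); tauto.
  - apply CT_concat; auto.
  - intros x [_ Hc]. destruct (theta_facts Hs Hc); tauto.
Qed.

Lemma forward :
  (forall p, star_dom p -> in_sg (afw p)) /\
  cont_on (prod_open (@discrete_open (sg E)) (@bopen E)) (@discrete_open (sg F)) (@star_dom E) afw /\
  (forall s x, star_dom (s, x) -> theta_dom (afw (s, x)) (phi x) /\ phi (theta s x) = theta (afw (s, x)) (phi x)).
Proof.
  split; [|split].
  - intros [[[mu nu]|] x] [Hs Hc]; [|destruct Hc]. simpl in Hc.
    pose proof (PQ_R Hs Hc) as (A & B & C).
    destruct (theta_facts Hs Hc) as (Hb & _ & _ & _ & Ht & _).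
    rewrite afw_eq. hnf.
    split; [apply finpath_pre; auto|]. split; [apply finpath_pre; auto|].
    rewrite <- !srcp_shiftn_rng by auto. now rewrite C.
  - apply LCs_cont. intros [[mu nu]|]; [|intros x [_ []]].
    destruct (classic (in_sg (Some (mu, nu)))) as [Hs|Hs]; [|intros x [H _]; contradiction].
    set (D := fun x => star_dom (Some (mu, nu), x)).
    assert (HD : forall x, D x -> cyl nu x) by (intros x [_ H]; exact H).
    assert (HCTt : CT D (theta (Some (mu, nu)))) by (apply CT_theta; auto).
    assert (HPQ : LC D (PQ (Some (mu, nu)))).
    { set (h := fun (t : (nat * nat) * (nat * nat)) =>
               let '((K1, L1), (K2, L2)) := t in (L2 + (K1 - K2), L1 + (K2 - K1))).
      apply (LC_ext (g := fun x => h (KL (plen nu) x, KL (plen mu) (theta (Some (mu, nu)) x)))).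
      - intros x _. unfold PQ, h. destruct (KL (plen nu) x), (KL (plen mu) (theta (Some (mu, nu)) x)). reflexivity.
      - apply LC_map. apply LC_pair.
        + apply (LC_mono (D := fun z => boundary z /\ len_ge z (plen nu))); [|apply KL_LC].
          intros x Hx. destruct (theta_facts Hs (HD x Hx)); tauto.
        + apply (LC_comp (D' := fun z => boundary z /\ len_ge z (plen mu))); auto; [apply KL_LC|].
          intros x Hx. destruct (theta_facts Hs (HD x Hx)) as (_ & _ & _ & _ & H1 & H2 & _); tauto. }
    assert (L1 : LC D (fun x => pre (fst (PQ (Some (mu, nu)) x)) (phi (theta (Some (mu, nu)) x)))).
    { apply (LC_dep (f := fun x => fst (PQ (Some (mu, nu)) x)) (fun c x => pre c (phi (theta (Some (mu, nu)) x)))).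
      - apply (LC_map (g := PQ (Some (mu, nu))) fst). auto.
      - intros c. apply (LC_comp (D' := fun z => boundary z /\ len_ge z c) (f := fun x => phi (theta (Some (mu, nu)) x)) (g := pre c)).
        + apply (CT_comp (D' := @boundary E)).
          * apply (CT_mono (D := D)); [tauto|auto].
          * auto.
          * intros x [Hx _]. destruct (theta_facts Hs (HD x Hx)); tauto.
        + apply LC_pre.
        + intros x [Hx <-]. split; [apply Hphi|].
          * destruct (theta_facts Hs (HD x Hx)); tauto.
          * apply (PQ_R Hs (HD x Hx)). }
    assert (L2 : LC D (fun x => pre (snd (PQ (Some (mu, nu)) x)) (phi x))).
    { apply (LC_dep (f := fun x => snd (PQ (Some (mu, nu)) x)) (fun c x => pre c (phi x))).
      - apply (LC_map (g := PQ (Some (mu, nu))) snd). auto.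
      - intros c. apply (LC_comp (D' := fun z => boundary z /\ len_ge z c) (f := phi) (g := pre c)).
        + apply (CT_mono (D := @boundary E)); auto.
          intros x [Hx _]. destruct (theta_facts Hs (HD x Hx)); tauto.
        + apply LC_pre.
        + intros x [Hx <-]. split; [apply Hphi|].
          * destruct (theta_facts Hs (HD x Hx)); tauto.
          * apply (PQ_R Hs (HD x Hx)). }
    exact (LC_map (fun t => Some t) (LC_pair L1 L2)).
  - intros [[mu nu]|] x [Hs Hc]; [|destruct Hc]. simpl in Hc.
    pose proof (PQ_R Hs Hc) as (A & B & C).
    destruct (theta_facts Hs Hc) as (Hb & _ & _ & _ & Ht & _).
    rewrite afw_eq.
    assert (Hpl : plen (pre (snd (PQ (Some (mu, nu)) x)) (phi x)) = snd (PQ (Some (mu, nu)) x)) by (apply plen_pre; auto).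
    split.
    + change (cyl (pre (snd (PQ (Some (mu, nu)) x)) (phi x)) (phi x)).
      apply cyl_iff; [apply finpath_pre; auto|]. rewrite Hpl. auto.
    + change (theta (Some (?a, ?b)) ?y) with (concat a (shiftn (plen b) y)) at 2.
      rewrite Hpl, <- C. symmetry. apply decomp.
Qed.

End Coc.

Section Bwd.
Variables E F : graph.
Variable phi : path E -> path F.
Variable a : sg E * path E -> sg F.
Hypothesis Hphi : forall x, boundary x -> boundary (phi x).
Hypothesis Ha_in : forall p, star_dom p -> in_sg (a p).
Hypothesis Ha_lc : forall s, LC (fun x => star_dom (s, x)) (fun x => a (s, x)).
Hypothesis Heq : forall s x, star_dom (s, x) ->
  theta_dom (a (s, x)) (phi x) /\ phi (theta s x) = theta (a (s, x)) (phi x).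

Definition sxo (c : option (edge E)) : sg E :=
  match c with Some e => Some (Fin (gr e) [], Fin (gs e) [e]) | None => None end.

Definition kb (x : path E) : nat :=
  match a (sxo (idx x 0), x) with Some (al, be) => plen al | None => 0 end.
Definition lb (x : path E) : nat :=
  match a (sxo (idx x 0), x) with Some (al, be) => plen be | None => 0 end.

Lemma sx_dom (x : path E) e : bdry_ge1 x -> idx x 0 = Some e ->
  star_dom (sxo (Some e), x) /\ theta (sxo (Some e)) x = shift1 x.
Proof.
  intros [Hb Hl] He. pose proof (chain_of Hb) as Hc.
  assert (Hfe : is_finpath (Fin (gs e) [e])) by (simpl; auto).
  assert (Hfr : is_finpath (Fin (gr e) [])) by (simpl; auto).
  split.
  - split; [simpl; auto|]. change (cyl (Fin (gs e) [e]) x). apply (cyl_char x Hfe).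
    split; auto. split.
    + simpl. symmetry. apply (proj1 Hc). auto.
    + intros k Hk. simpl in Hk. replace k with 0 by lia. auto.
  - change (concat (Fin (gr e) []) (shift1 x) = shift1 x).
    assert (Hs : srcp (shift1 x) = gr e) by (apply srcp_shift1; auto).
    apply path_ext.
    + rewrite srcp_concat; auto.
    + intros n. rewrite idx_concat. simpl. now rewrite Nat.sub_0_r.
Qed.

Lemma back_R (x : path E) : bdry_ge1 x -> R (phi (shift1 x)) (kb x) (phi x) (lb x).
Proof.
  intros Hx. pose proof Hx as [Hb Hl].
  destruct (idx x 0) as [e|] eqn:He; [|exfalso; exact (len_ge_S_idx x 0 Hl He)].
  destruct (sx_dom Hx He) as [Hd Ht].
  pose proof (Ha_in Hd) as Hin. destruct (Heq Hd) as [Hdom Hthe].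
  unfold kb, lb. rewrite He. rewrite Ht in Hthe.
  destruct (a (sxo (Some e), x)) as [[al be]|]; [|destruct Hdom].
  destruct Hin as (Hal & Hbe & Hr).
  change (cyl be (phi x)) in Hdom. apply (cyl_iff Hbe) in Hdom as (Hpb & Hpl & Hpp).
  change (theta (Some (al, be)) (phi x)) with (concat al (shiftn (plen be) (phi x))) in Hthe.
  rewrite Hthe. split; [|split; auto].
  - rewrite <- (Nat.add_0_r (plen al)). apply len_ge_concat; [apply finpath_fin; auto|].
    destruct (shiftn (plen be) (phi x)); simpl; auto; lia.
  - destruct (finpath_fin Hal) as (v & l' & ->). apply shift_concat.
    rewrite srcp_shiftn_rng, Hpp; auto.
Qed.

Lemma LC_idx0 : LC (@bdry_ge1 E) (fun x => idx x 0).
Proof.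
  apply (LC_ext (g := fun x => idx (pre 1 x) 0)).
  - intros x _. rewrite idx_pre. reflexivity.
  - apply (LC_map (g := pre 1) (fun p => idx p 0)). apply (LC_mono (D := fun z => boundary z /\ len_ge z 1)); [|apply LC_pre].
    intros x H; exact H.
Qed.

Lemma LC_back (h : sg F -> nat) : LC (@bdry_ge1 E) (fun x => h (a (sxo (idx x 0), x))).
Proof.
  apply (LC_dep (f := fun x => idx x 0) (fun c x => h (a (sxo c, x)))).
  - apply LC_idx0.
  - intros c. apply (LC_map (g := fun x => a (sxo c, x))).
    apply (LC_mono (D := fun x => star_dom (sxo c, x))); auto.
    intros x [Hx He]. destruct c as [e|]; [|exfalso; destruct Hx as [_ Hl]; exact (len_ge_S_idx x 0 Hl He)].
    apply (sx_dom Hx He).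
Qed.

Lemma backward :
  cont_on (@bopen E) (@discrete_open nat) (@bdry_ge1 E) kb /\
  cont_on (@bopen E) (@discrete_open nat) (@bdry_ge1 E) lb /\
  (forall x, bdry_ge1 x -> len_ge (phi (shift1 x)) (kb x) /\ len_ge (phi x) (lb x) /\
       shiftn (kb x) (phi (shift1 x)) = shiftn (lb x) (phi x)).
Proof.
  split; [|split].
  - apply LC_cont. apply (LC_back (fun t => match t with Some (al, be) => plen al | None => 0 end)).
  - apply LC_cont. apply (LC_back (fun t => match t with Some (al, be) => plen be | None => 0 end)).
  - intros x Hx. apply back_R; auto.
Qed.

End Bwd.

Lemma homeo_sym (E F : graph) (phi : path E -> path F) psi : is_homeo phi psi -> is_homeo psi phi.
Proof. intros (H1 & H2 & H3 & H4 & H5 & H6). repeat split; auto. Qed.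

Theorem proposition9p12 (E F : graph) :
  graph_coe E F <-> action_coe E F.
Proof.
  split.
  - intros (phi & psi & k & l & k' & l' & Hh & Hk & Hl & Hk' & Hl' & Hc & Hc').
    pose proof Hh as (Hb1 & Hb2 & _ & _ & Hc1 & Hc2).
    destruct (@forward E F phi k l Hb1 Hc (cont_LC Hk) (cont_LC Hl) (cont_CT Hc1)) as (A1 & A2 & A3).
    destruct (@forward F E psi k' l' Hb2 Hc' (cont_LC Hk') (cont_LC Hl') (cont_CT Hc2)) as (B1 & B2 & B3).
    exists phi, psi, (afw phi k l), (afw psi k' l').
    split; [exact Hh|]. split; [exact A1|]. split; [exact B1|]. split; [exact A2|].
    split; [exact B2|]. split; [exact A3|exact B3].
  - intros (phi & psi & a & b & Hh & Ha & Hb & Hac & Hbc & Hae & Hbe).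
    pose proof Hh as (Hb1 & Hb2 & _ & _ & Hc1 & Hc2).
    destruct (@backward E F phi a Ha (cont_LCs Hac) Hae) as (A1 & A2 & A3).
    destruct (@backward F E psi b Hb (cont_LCs Hbc) Hbe) as (B1 & B2 & B3).
    exists phi, psi, (kb a), (lb a), (kb b), (lb b).
    split; [exact Hh|]. split; [exact A1|]. split; [exact A2|]. split; [exact B1|].
    split; [exact B2|]. split; [exact A3|exact B3].
Qed.
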